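(* Let $(X,d)$ be a compact metric space and $\mathcal{W}$ a uniformly bounded open cover of $X$. Let $\mu=\sum_{i=1}^nm_i\delta_{x_i}\in\mathrm{Viet}^{\mathrm{m}}(\mathcal{W})$ (distinct $x_i$, $m_i>0$), let $\mathcal{U}=\{U_1,\dots,U_n\}$ be pairwise disjoint open subsets of $X$ with $x_i\in U_i$ and $\bigcup_iU_i$ contained in an element of $\mathcal{W}$, let $\varepsilon>0$, and let $B(\mu)=\tilde B(\mu)\cap\mathrm{Viet}^{\mathrm{m}}(\mathcal{W})$ where $\tilde B(\mu)$ is an open ball centered at $\mu$ in $P(X)$ with respect to the Wasserstein metric. Define the multivalued map $F\colon P_{\mathcal{U}}\cap B(\mu)\to P(X)$ by $F(\zeta)=\{\nu\in P(\mu,\mathcal{U},\varepsilon) : \mathrm{supp}(\nu)\subseteq\mathrm{supp}(\zeta)\}$. Then for every $\zeta\in P_{\mathcal{U}}\cap B(\mu)$, the set $F(\zeta)$ is non-empty, convex, and closed.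
   Context: $P(X)$ is the space of Borel probability measures on $X$ (with the weak topology, equivalently the Wasserstein metric since $X$ is compact). $\mathrm{Viet}^{\mathrm{m}}(\mathcal{W})\subseteq P(X)$ is the set of finitely supported probability measures whose support is contained in some element of $\mathcal{W}$. For finitely supported $\nu=\sum_jw_j\delta_{a_j}$ and $Y\subseteq X$, $\nu(Y)=\sum_{a_j\in Y}w_j$. $P_U=\{\nu\in\mathrm{Viet}^{\mathrm{m}}(\mathcal{W}):\mathrm{supp}(\nu)\cap U\ne\varnothing\}$, $P_{\mathcal{U}}=\bigcap_iP_{U_i}$, and $P(\mu,\mathcal{U},\varepsilon)=\{\nu\in\mathrm{Viet}^{\mathrm{m}}(\mathcal{W}) : \mathrm{supp}(\nu)\subseteq\bigcup_iU_i,\ |\nu(U_i)-\mu(U_i)|\le\varepsilon\ \forall i\}$. *)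

(* Defs.v *)
From HB Require Import structures.
From mathcomp Require Import all_boot all_order all_algebra.
From mathcomp Require Import all_classical all_reals all_analysis.
Set Implicit Arguments. Unset Strict Implicit. Unset Printing Implicit Defensive.
Import Order.TTheory GRing.Theory Num.Theory.
Import numFieldNormedType.Exports.
Local Open Scope classical_set_scope.
Local Open Scope ring_scope.

(** metric spaces with a distinguished point (i.e. non-empty metric spaces);
    the point is only needed to build the Borel measurable structure. *)
#[short(type="pmetricType")]
HB.structure Definition PointedMetric (K : numDomainType) :=
  { M of Metric K M & Pointed M }.

Section Defs.
Context {R : realType} {X : pmetricType R}.

Definition Borel : measurableType _ := g_sigma_algebraType (@open X).

Definition PX := probability Borel R.

Definition supp (nu : PX) : set X :=
  [set y | forall V : set X, open V -> V y -> (0 < nu V)%E].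

Definition fin_supported (nu : PX) : Prop :=
  exists S : set X, finite_set S /\ nu S = 1%E.

Definition VietM (W : set (set X)) (nu : PX) : Prop :=
  fin_supported nu /\ exists A, W A /\ supp nu `<=` A.

Definition P_one (W : set (set X)) (V : set X) (nu : PX) : Prop :=
  VietM W nu /\ supp nu `&` V !=set0.

Definition P_fam (W : set (set X)) (n : nat) (U : 'I_n -> set X) (nu : PX) :=
  forall i, P_one W (U i) nu.

Definition P_near (W : set (set X)) (mu : PX) (n : nat) (U : 'I_n -> set X)
    (eps : R) (nu : PX) : Prop :=
  VietM W nu /\ supp nu `<=` \bigcup_i U i /\
  forall i, `| fine (nu (U i)) - fine (mu (U i)) | <= eps.

Definition W1 (mu nu : PX) : \bar R :=
  ereal_inf [set c | exists pi : probability (Borel * Borel)%type R,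
     (forall A : set Borel, measurable A -> pi (fst @^-1` A) = mu A) /\
     (forall A : set Borel, measurable A -> pi (snd @^-1` A) = nu A) /\
     c = (\int[pi]_p (mdist (p.1 : X) (p.2 : X))%:E)%E].

Definition PX_convex (C : set PX) : Prop :=
  forall (nu1 nu2 nu : PX) (t : R), 0 <= t <= 1 ->
    (forall A : set Borel, measurable A ->
        nu A = (t%:E * nu1 A + (1 - t)%:E * nu2 A)%E) ->
    C nu1 -> C nu2 -> C nu.

(** Closedness in the weak topology on P(X): every point outside C has a
    basic weak neighbourhood { nu | |int f_j dnu - int f_j dmu| < e, j<k }
    (f_j continuous) disjoint from C. *)
Definition weak_closed (C : set PX) : Prop :=
  forall mu : PX, ~ C mu ->
    exists (k : nat) (f : 'I_k -> X -> R) (e : R),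
      0 < e /\ (forall j, continuous (f j)) /\
      forall nu : PX,
        (forall j, `| (\int[nu]_(y in [set: Borel]) f j y)
                      - (\int[mu]_(y in [set: Borel]) f j y) | < e) ->
        ~ C nu.

Definition Fmap (W : set (set X)) (mu : PX) (n : nat) (U : 'I_n -> set X)
    (eps : R) (zeta : PX) : set PX :=
  [set nu | P_near W mu U eps nu /\ supp nu `<=` supp zeta].

End Defs.

(* Main.v *)
Require Import Defs.
From HB Require Import structures.
From mathcomp Require Import all_boot all_order all_algebra.
From mathcomp Require Import all_classical all_reals all_analysis.
From mathcomp Require Import ring lra.
Import Order.TTheory GRing.Theory Num.Theory.
Import numFieldNormedType.Exports.
Local Open Scope classical_set_scope.
Local Open Scope ring_scope.

Set Implicit Arguments.
Unset Strict Implicit.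
Unset Printing Implicit Defensive.
Section Basics.
Context {R : realType} {X : pmetricType R}.
Local Notation B := (@Borel R X).

Lemma open_mB (A : set X) : open A -> measurable (A : set B).
Proof. by move=> oA; apply: sub_sigma_algebra. Qed.

Lemma closed_mB (A : set X) : closed A -> measurable (A : set B).
Proof.
move=> cA; rewrite -(setCK A); apply: measurableC; apply: open_mB.
exact: closed_openC.
Qed.

Lemma fin_closed (A : set X) : finite_set A -> closed A.
Proof.
apply: (accessible_finite_set_closed).1.
apply: hausdorff_accessible; exact: metric_hausdorff.
Qed.

Lemma fin_mB (A : set X) : finite_set A -> measurable (A : set B).
Proof. by move=> fA; apply: closed_mB; apply: fin_closed. Qed.

Lemma cont_mdist (s : X) : continuous (fun y : X => mdist y s).
Proof.
move=> y0; apply/cvgrPdist_lt => e e0.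
have : \forall y \near y0, ball y0 e y by apply: nbhsx_ballx.
apply: filterS => y; rewrite ballEmdist /= => hy.
have t1 := metric_triangle y0 y s.
have t2 := metric_triangle y y0 s.
rewrite (metric_sym y y0) in t2.
have := mdist_ge0 y0 y.
move=> h0; rewrite ltr_norml.
lra.
Qed.

Lemma cont_meas (f : X -> R) : continuous f -> measurable_fun setT (f : B -> R).
Proof.
move=> cf; apply: (measurability _ (measurable_realfun.RGenOpens.measurableE R)).
move=> _ [_ [a [b ->] <-]]; rewrite setTI; apply: open_mB.

exact: ((continuousP f).1 cf _ (interval_open _ _)).
Qed.

End Basics.

Section FDist.
Context {R : realType} {X : pmetricType R}.
Local Notation B := (@Borel R X).
Variables (n : nat) (y : 'I_n -> X) (m : 'I_n -> R).
Hypothesis m0 : forall i, 0 <= m i.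
Hypothesis m1 : \sum_(i < n) m i = 1.

Definition fdist (A : set B) : \bar R :=
  (\sum_(i < n) mscale (NngNum (m0 i)) (@dirac _ B (y i) R) A)%E.

Let fdist0 : fdist set0 = 0%E.
Proof. by rewrite /fdist big1 // => i _; rewrite measure0. Qed.

Let fdist_ge0 A : (0 <= fdist A)%E.
Proof. by rewrite /fdist; apply: sume_ge0 => i _; apply: measure_ge0. Qed.

Let fdist_sigma_additive : semi_sigma_additive fdist.
Proof.
move=> F mF tF mUF; rewrite [X in _ --> X](_ : _ =
    lim ((fun n => (\sum_(0 <= i < n) fdist (F i))%E) @ \oo)).
  by apply: is_cvg_ereal_nneg_natsum => k _; exact: fdist_ge0.
rewrite nneseries_sum//.
rewrite /fdist; apply: eq_bigr => /= i _.
exact: measure_semi_bigcup.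
Qed.

HB.instance Definition _ := isMeasure.Build _ _ _ fdist
  fdist0 fdist_ge0 fdist_sigma_additive.

Lemma fdistE A : fdist A = (\sum_(i < n) m i * (y i \in A)%:R)%:E.
Proof.
rewrite /fdist -sumEFin; apply: eq_bigr => i _.
by rewrite /mscale /= diracE.
Qed.

Let fdist_setT : fdist [set: B] = 1%E.
Proof.
rewrite fdistE; congr (_%:E).
under eq_bigr do rewrite in_setT mulr1.
exact: m1.
Qed.

HB.instance Definition _ :=
  @Measure_isProbability.Build _ _ R fdist fdist_setT.

Definition fdistP : @PX R X := fdist.

End FDist.

Section Supp.
Context {R : realType} {X : pmetricType R}.
Local Notation B := (@Borel R X).
Implicit Types nu : @PX R X.

Lemma supp_sub nu (S : set X) : finite_set S -> nu S = 1%E -> supp nu `<=` S.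
Proof.
move=> fS nS y hy; apply: contrapT => nSy.
have := hy (~` S) (closed_openC (fin_closed fS)) nSy.
by rewrite probability_setC ?nS ?subee ?ltxx //; apply: fin_mB.
Qed.

Lemma nu_set1_0 nu (t : X) : ~ supp nu t -> nu [set t] = 0%E.
Proof.
move=> nt; have [V [oV Vt nV]] : exists V, [/\ open V, V t & ~ (0 < nu V)%E].
  apply: contrapT => hc; apply: nt => V oV Vt; apply: contrapT => h.
  by apply: hc; exists V; split.
apply/eqP; rewrite eq_le measure_ge0 andbT.
have sub : (nu [set t] <= nu V)%E.
  apply: le_measure; last by move=> z ->.
  - by rewrite inE; apply: fin_mB; apply: finite_set1.
  - by rewrite inE; apply: open_mB.
by apply: le_trans sub _; rewrite leNgt; apply/negP.
Qed.

Lemma seq_null nu (ts : seq X) :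
  (forall t, t \in ts -> nu [set t] = 0%E) -> nu [set` ts] = 0%E.
Proof.
elim: ts => [|a s IH] h.
  by rewrite (_ : [set` [::]] = set0) ?measure0 //; apply/seteqP; split => z.
have -> : [set` a :: s] = [set a] `|` [set` s].
  apply/seteqP; split => z /=.
    by rewrite inE => /orP [/eqP ->|zs]; [left|right].
  by case=> [->|zs]; rewrite inE ?eqxx ?zs ?orbT.
apply/eqP; rewrite eq_le measure_ge0 andbT.
have mA : measurable ([set a] : set B) by apply: fin_mB; apply: finite_set1.
have mS : measurable ([set` s] : set B) by apply: fin_mB.
apply: le_trans (measureU2 nu mA mS) _.
rewrite [X in (X + _ <= _)%E](_ : _ = 0%E); last by apply: h; rewrite mem_head.
rewrite [X in (_ + X <= _)%E](_ : _ = 0%E) ?adde0 //.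
by apply: IH => t ts; apply: h; rewrite inE ts orbT.
Qed.

Lemma conc nu (S T : set X) : finite_set S -> nu S = 1%E ->
  finite_set T -> supp nu `<=` T -> nu T = 1%E.
Proof.
move=> fS nS fT sT.
have fST : finite_set (S `\` T) by apply: sub_finite_set fS; apply: subDsetl.
have [ts hts] := (finite_seqP _).1 fST.
have n0 : nu (S `\` T) = 0%E.
  rewrite hts; apply: seq_null => t tts; apply: nu_set1_0 => st.
  have : [set` ts] t by [].
  by rewrite -hts => -[_]; apply; apply: sT.
have mT : measurable (T : set B) by apply: fin_mB.
have mD : measurable (S `\` T : set B) by apply: fin_mB.
apply/eqP; rewrite eq_le probability_le1 //=.
have sub : (nu S <= nu (T `|` (S `\` T)))%E.
  apply: le_measure; rewrite ?inE; first exact: fin_mB.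
  - exact: measurableU.
  - by move=> z Sz; have [Tz|nTz] := pselect (T z); [left|right].
rewrite -nS; apply: le_trans sub _.
apply: le_trans (measureU2 nu mT mD) _.
by rewrite [X in (_ + X <= _)%E]n0 adde0.
Qed.

End Supp.

Section Supp2.
Context {R : realType} {X : pmetricType R}.
Local Notation B := (@Borel R X).
Lemma nullC (nu : @PX R X) (T : set B) : measurable T -> nu T = 1%E -> nu (~` T) = 0%E.
Proof. by move=> mT nT; rewrite probability_setC // nT subee. Qed.
End Supp2.

Section Integ.
Context {R : realType} {X : pmetricType R}.
Local Notation B := (@Borel R X).
Implicit Types nu : @PX R X.

Lemma int_conc nu (T : set X) (f g : X -> R) :
  measurable (T : set B) -> nu T = 1%E ->
  measurable_fun setT (f : B -> R) -> measurable_fun setT (g : B -> R) ->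
  (forall t, T t -> f t = g t) ->
  \int[nu]_(y in [set: B]) f y = \int[nu]_(y in [set: B]) g y.
Proof.
move=> mT nT mf mg fg; rewrite /Rintegral; congr fine.
apply: ae_eq_integral => //.
- by apply/measurable_realfun.measurable_EFinP.
- by apply/measurable_realfun.measurable_EFinP.
exists (~` T); split.
- exact: measurableC.
- exact: nullC.
- move=> z /= hz Tz; apply: hz => _; by rewrite fg.
Qed.

Lemma int_indic nu (U : set X) : measurable (U : set B) ->
  \int[nu]_(y in [set: B]) (\1_U y : R) = fine (nu U).
Proof.
by move=> mU; rewrite /Rintegral integral_indic // setIT.
Qed.

Lemma int_pos nu (T : set X) (h : X -> R) :
  measurable (T : set B) -> nu T <> 1%E ->
  continuous h -> (forall y, 0 <= h y <= 1) -> (forall y, ~ T y -> 0 < h y) ->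
  0 < \int[nu]_(y in [set: B]) h y.
Proof.
move=> mT nT ch h01 hpos.
have mh : measurable_fun setT (h : B -> R) by apply: cont_meas.
have mhE := (measurable_realfun.measurable_EFinP _ _).2 mh.
have I0 : (0 <= \int[nu]_(y in [set: B]) (h y)%:E)%E.
  by apply: integral_ge0 => y _; rewrite lee_fin; case/andP: (h01 y).
have I1 : (\int[nu]_(y in [set: B]) (h y)%:E <= 1)%E.
  rewrite [X in (_ <= X)%E](_ : _ = (\int[nu]_(y in [set: B]) (cst 1 y))%E); last first.
    rewrite integral_cst // [X in (_ * X)%E](_ : _ = 1%E) ?mule1 //; exact: probability_setT.
  apply: ge0_le_integral => //.
  - by move=> y _; rewrite lee_fin; case/andP: (h01 y).
  - by move=> y _; rewrite lee_fin; case/andP: (h01 y).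
rewrite /Rintegral; rewrite lt_neqAle fine_ge0 // andbT.
apply/eqP => I0'.
have Ie : (\int[nu]_(y in [set: B]) (h y)%:E = 0)%E.
  move: I0 I1 I0'; case: (\int[nu]_(y in [set: B]) (h y)%:E)%E => //= r.
  by move=> _ _ <-.
have : (\int[nu]_(y in [set: B]) `|(h y)%:E|)%E = 0%E.
  rewrite -Ie; apply: eq_integral => y _; rewrite gee0_abs //.
  by rewrite lee_fin; case/andP: (h01 y).
move/(ae_eq_integral_abs nu measurableT mhE) => [N [mN N0 sN]].
apply: nT; apply/eqP; rewrite eq_le probability_le1 //=.
have : (nu (~` T) <= nu N)%E.
  apply: le_measure; rewrite ?inE //; first exact: measurableC.
  move=> z nTz; apply: sN => /= hz.
  move: (hz Logic.I) => /= /eqP; rewrite eqe => /eqP e0.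
  by have := hpos z nTz; rewrite e0 ltxx.
rewrite N0 probability_setC //.
move: (probability_le1 nu mT) (measure_ge0 nu T).
case: (nu T) => // r; rewrite -EFinB !lee_fin => ? ? ?; lra.
Qed.

End Integ.

Section NE.
Context {R : realType} {X : pmetricType R}.
Local Notation B := (@Borel R X).

Lemma fdistE' n (y : 'I_n -> X) (m : 'I_n -> R) (m0 : forall i, 0 <= m i)
  (m1 : \sum_(i < n) m i = 1) (A : set B) :
  fdistP y m0 m1 A = (\sum_(i < n | y i \in A) m i)%:E.
Proof.
rewrite /fdistP /= fdistE [in RHS]big_mkcond /=; congr (_%:E); apply: eq_bigr => i _.
by case: (y i \in A); rewrite ?mulr1 ?mulr0.
Qed.

Lemma sumU n (U : 'I_n -> set X) (m : 'I_n -> R) (z : 'I_n -> X) :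
  (forall i j, i != j -> U i `&` U j = set0) -> (forall i, U i (z i)) ->
  forall i, \sum_(j < n | z j \in U i) m j = m i.
Proof.
move=> dU zU i; rewrite (bigD1 i) /=; last by rewrite inE.
rewrite big1 ?addr0 // => j /andP [zj ji].
exfalso; have := dU i j; rewrite eq_sym ji => /(_ isT) /seteqP [+ _].
by move/(_ (z j)) => /=; apply; split => //; rewrite inE in zj.
Qed.

End NE.

Section NE2.
Context {R : realType} {X : pmetricType R}.
Local Notation B := (@Borel R X).

Lemma F_nonempty (W : set (set X)) n (x : 'I_n -> X) (m : 'I_n -> R)
  (mu zeta : @PX R X) (U : 'I_n -> set X) (eps : R) :
  (forall i, 0 < m i) ->
  (forall A : set B, measurable A -> mu A = (\sum_(i < n | x i \in A) m i)%:E) ->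
  (forall i, open (U i)) -> (forall i j, i != j -> U i `&` U j = set0) ->
  (forall i, U i (x i)) ->
  (exists A, W A /\ \bigcup_i U i `<=` A) -> 0 < eps -> P_fam W U zeta ->
  Fmap W mu U eps zeta !=set0.
Proof.
move=> hm hmu oU dU xU [A0 [WA0 UA0]] e0 Pz.
have m0 i : 0 <= m i := ltW (hm i).
have m1 : \sum_(i < n) m i = 1.
  have := hmu setT measurableT; rewrite probability_setT => -[] /esym.
  by under eq_bigl do rewrite in_setT.
have [y hy] := choice (fun i => (Pz i).2).
set nu := fdistP y m0 m1.
set S : set X := [set` map y (enum 'I_n)].
have fS : finite_set S by exact: finite_seq.
have yS i : y i \in S.
  by apply/mem_set; apply/mapP; exists i => //; rewrite mem_enum.
have nS : nu S = 1%E.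
  rewrite /nu fdistE'; under eq_bigl do rewrite yS.
  by rewrite m1.
have sS := supp_sub fS nS.
have SU : S `<=` \bigcup_i U i.
  move=> s /= /mapP [i _ ->]; exists i => //; exact: (hy i).2.
have nU i : nu (U i) = (m i)%:E.
  by rewrite /nu fdistE' (sumU m dU (fun i => (hy i).2)).
have mU i : mu (U i) = (m i)%:E.
  by rewrite hmu ?(sumU m dU xU) //; apply: open_mB.
exists nu; split; [split; [split|split]|].
- by exists S.
- exists A0; split => //; move=> z /sS /SU; exact: UA0.
- by move=> z /sS /SU.
- by move=> i; rewrite nU mU /= subrr normr0 ltW.
- by move=> z /sS /= /mapP [i _ ->]; exact: (hy i).1.
Qed.

End NE2.

Section Conv.
Context {R : realType} {X : pmetricType R}.
Local Notation B := (@Borel R X).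
Implicit Types nu : @PX R X.

Lemma notsupp nu (y : X) : ~ supp nu y ->
  exists V : set X, [/\ open V, V y & nu V = 0%E].
Proof.
move=> nt; have [V [oV Vt nV]] : exists V, [/\ open V, V y & ~ (0 < nu V)%E].
  apply: contrapT => hc; apply: nt => V oV Vt; apply: contrapT => h.
  by apply: hc; exists V; split.
exists V; split => //; apply/eqP; rewrite eq_le measure_ge0 andbT.
by rewrite leNgt; apply/negP.
Qed.

Lemma probE nu (A : set B) : measurable A -> nu A = (fine (nu A))%:E.
Proof.
move=> mA; rewrite fineK // ge0_fin_numE ?measure_ge0 //.
by apply: le_lt_trans (probability_le1 nu mA) _; exact: ltey.
Qed.

Lemma F_convex (W : set (set X)) n (mu zeta : @PX R X) (U : 'I_n -> set X)
  (eps : R) :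
  (forall i, open (U i)) ->
  (exists A, W A /\ \bigcup_i U i `<=` A) ->
  PX_convex (Fmap W mu U eps zeta).
Proof.
move=> oU [A0 [WA0 UA0]] nu1 nu2 nu t /andP[t0 t1] hnu.
move=> [[[[S1 [fS1 n1]] _] [sU1 e1]] sz1] [[[[S2 [fS2 n2]] _] [sU2 e2]] sz2].
have ssub : supp nu `<=` supp nu1 `|` supp nu2.
  move=> y hy; apply: contrapT => /not_orP [h1 h2].
  have [V1 [oV1 V1y nV1]] := notsupp h1.
  have [V2 [oV2 V2y nV2]] := notsupp h2.
  have mV : measurable (V1 `&` V2 : set B) by apply: open_mB; apply: openI.
  have z1 : nu1 (V1 `&` V2) = 0%E.
    apply/eqP; rewrite eq_le measure_ge0 andbT -nV1.
    by apply: le_measure; [rewrite inE|rewrite inE; apply: open_mB|apply: subIsetl].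
  have z2 : nu2 (V1 `&` V2) = 0%E.
    apply/eqP; rewrite eq_le measure_ge0 andbT -nV2.
    by apply: le_measure; [rewrite inE|rewrite inE; apply: open_mB|apply: subIsetr].
  have := hy _ (openI oV1 oV2) (conj V1y V2y).
  by rewrite hnu // z1 z2 !mule0 adde0 ltxx.
have fS : finite_set (S1 `|` S2) by rewrite finite_setU.
have mS : measurable (S1 `|` S2 : set B) by apply: fin_mB.
have nS1 : nu1 (S1 `|` S2) = 1%E.
  apply/eqP; rewrite eq_le probability_le1 //= -n1.
  by apply: le_measure; [rewrite inE; apply: fin_mB|rewrite inE|apply: subsetUl].
have nS2 : nu2 (S1 `|` S2) = 1%E.
  apply/eqP; rewrite eq_le probability_le1 //= -n2.
  by apply: le_measure; [rewrite inE; apply: fin_mB|rewrite inE|apply: subsetUr].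
have sU : supp nu `<=` \bigcup_i U i.
  by move=> y /ssub [/sU1|/sU2].
split; [split; [split|split]|].
- exists (S1 `|` S2); split => //.
  by rewrite hnu // nS1 nS2 !mule1 -EFinD subrKC.
- by exists A0; split => //; move=> y /sU /UA0.
- exact: sU.
- move=> i; have mU : measurable (U i : set B) by apply: open_mB.
  rewrite hnu // (probE nu1 mU) (probE nu2 mU) -!EFinM -EFinD /=.
  set a1 := fine (nu1 (U i)); set a2 := fine (nu2 (U i)).
  set b := fine (mu (U i)).
  have := e1 i; have := e2 i; rewrite -/a1 -/a2 -/b => h2 h1.
  have -> : t * a1 + (1 - t) * a2 - b = t * (a1 - b) + (1 - t) * (a2 - b).
    by ring.
  apply: le_trans (ler_normD _ _) _.
  rewrite !normrM (ger0_norm t0) (@ger0_norm _ (1 - t)); last by rewrite subr_ge0.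
  nra.
- by move=> y /ssub [/sz1|/sz2].
Qed.

End Conv.

Section Hfun.
Context {R : realType} {X : pmetricType R}.
Local Notation B := (@Borel R X).

Definition hfun (ts : seq X) (y : X) : R := \prod_(s <- ts) Num.min 1 (mdist y s).

Lemma hfun_cont ts : continuous (hfun ts).
Proof.
elim: ts => [|a l IH].
  have -> : hfun [::] = fun=> 1 by apply/funext => y; rewrite /hfun big_nil.
  exact: cst_continuous.
have -> : hfun (a :: l) = (fun y => Num.min 1 (mdist y a)) \* hfun l.
  by apply/funext => y; rewrite /hfun big_cons.
move=> y; apply: continuousM; last exact: IH.
have := @min_fun_continuous _ X R (fun=> 1) (fun y => mdist y a) (@cst_continuous X R 1) (cont_mdist (s:=a)).
by move/(_ y).
Qed.

Lemma hfun01 ts y : 0 <= hfun ts y <= 1.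
Proof.
apply/andP; split.
  by apply: prodr_ge0 => s _; rewrite le_min ler01 mdist_ge0.
by apply: prodr_ile1 => s _; rewrite le_min ler01 mdist_ge0 ge_min lexx.
Qed.

Lemma hfun0 ts t : t \in ts -> hfun ts t = 0.
Proof.
move=> tt; rewrite /hfun (big_rem t) //= mdistxx.
by rewrite (@min_r _ _ 1 0) ?ler01 // mul0r.
Qed.

Lemma hfun_pos ts y : y \notin ts -> 0 < hfun ts y.
Proof.
move=> yt; rewrite /hfun big_seq; apply: prodr_gt0 => s st.
rewrite lt_min ltr01 mdist_gt0 /=.
by apply: contraNneq yt => ->.
Qed.

End Hfun.

Section Closed.
Context {R : realType} {X : pmetricType R}.
Local Notation B := (@Borel R X).

Lemma F_closed (W : set (set X)) n (mu zeta : @PX R X) (U : 'I_n -> set X)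
  (eps : R) :
  (forall i, open (U i)) -> (exists A, W A /\ \bigcup_i U i `<=` A) ->
  VietM W zeta -> weak_closed (Fmap W mu U eps zeta).
Proof.
move=> oU [A0 [WA0 UA0]] [[Sz [fSz nSz]] _] mu' nF.

set T : set X := supp zeta `&` \bigcup_i U i.
have fT : finite_set T.
  by apply: (sub_finite_set _ fSz) => y [/(supp_sub fSz nSz)].
have mT : measurable (T : set B) by apply: fin_mB.
have concF nu : Fmap W mu U eps zeta nu -> nu T = 1%E.
  move=> [[[[S [fS nS]] _] [sU _]] sz].
  by apply: (conc fS nS fT) => y hy; split; [exact: sz|exact: sU].
have [ts hts] := (finite_seqP _).1 fT.
have [mT1|mT1] := pselect (mu' T = 1%E); last first.
  have hp : forall y, ~ T y -> 0 < hfun ts y.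
    move=> y nTy; apply: hfun_pos; apply/negP => yt; apply: nTy.
    by rewrite hts.
  have e0 := int_pos mT mT1 (@hfun_cont R X ts) (hfun01 ts) hp.
  exists 1%N, (fun _ => hfun ts), (\int[mu']_(y in [set: B]) hfun ts y).
  split => //; split; first by move=> _; apply: hfun_cont.
  move=> nu hnu Fnu.
  have I0 : \int[nu]_(y in [set: B]) hfun ts y = 0.
    rewrite (@int_conc R X nu T (hfun ts) (fun=> 0) mT (concF nu Fnu)).
    - by rewrite Rintegral_cst // mul0r.
    - by apply: cont_meas; apply: hfun_cont.
    - exact: measurable_cst.
    - by move=> t; rewrite hts => tt; apply: hfun0.
  by have := hnu ord0; rewrite I0 sub0r normrN gtr0_norm // ltxx.
have [i hi] : exists i, eps < `|fine (mu' (U i)) - fine (mu (U i))|.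
  apply: contrapT => H; apply: nF.
  have sT := supp_sub fT mT1.
  split; [split; [split|split]|].
  - by exists T.
  - by exists A0; split => // y /sT [_ /UA0].
  - by move=> y /sT [].
  - by move=> i; rewrite leNgt; apply/negP => hi; apply: H; exists i.
  - by move=> y /sT [].
have cA : closed (T `\` U i).
  by apply: fin_closed; apply: sub_finite_set fT; apply: subDsetl.
have cB : closed (T `&` U i).
  by apply: fin_closed; apply: sub_finite_set fT; apply: subIsetl.
have dAB : (T `\` U i) `&` (T `&` U i) = set0.
  by apply/seteqP; split => z // [[_ nU] [_ Uz]].
have [g [cg gA gB gr]] :=
  @urysohn_ext_itv X R (@pseudometric_normal R X) _ _ 0 1 cA cB dAB ltr01.
have mU : measurable (U i : set B) by apply: open_mB.
have gint (nu : @PX R X) : nu T = 1%E ->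
    \int[nu]_(y in [set: B]) g y = fine (nu (U i)).
  move=> nT; rewrite -int_indic //; apply: (int_conc mT nT).
  - exact: cont_meas.
  - exact: measurable_realfun.measurable_indic.
  - move=> t Tt; rewrite indicE; have [Ut|Ut] := pselect (U i t).
    + by rewrite mem_set //; apply: gB; exists t.
    + by rewrite memNset //; apply: gA; exists t.
set a := fine (mu' (U i)); set b := fine (mu (U i)).
exists 1%N, (fun _ => g), (`|a - b| - eps); split; first by rewrite subr_gt0.
split; first by move=> _; exact: cg.
move=> nu hnu Fnu.
have := hnu ord0; rewrite (gint nu (concF nu Fnu)) (gint mu' mT1) -/a => h1.
have [[_ [_ h2]] _] := Fnu.
have := h2 i; rewrite -/b; set c := fine (nu (U i)) => h3.
have tri : `|a - b| <= `|c - a| + `|c - b|.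
  rewrite (distrC c a); have := ler_normD (a - c) (c - b).
  by rewrite addrA subrK.
by have := le_lt_trans tri (ltr_leD h1 h3); rewrite subrK ltxx.
Qed.

End Closed.


Unset Implicit Arguments.
Set Strict Implicit.

Theorem proposition4p8 (R : realType) (X : pmetricType R)
    (W : set (set X)) (n : nat) (x : 'I_n -> X) (m : 'I_n -> R)
    (mu : @PX R X) (U : 'I_n -> set X) (eps r : R) :
  compact [set: X] ->
  (forall A, W A -> open A) ->
  (forall y : X, exists A, W A /\ A y) ->
  (exists M : R, forall A, W A -> forall y z, A y -> A z -> mdist y z <= M) ->
  injective x -> (forall i, 0 < m i) ->
  (forall A : set (@Borel R X), measurable A ->
     mu A = (\sum_(i < n | x i \in A) m i)%:E) ->
  VietM W mu ->
  (forall i, open (U i)) ->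
  (forall i j, i != j -> U i `&` U j = set0) ->
  (forall i, U i (x i)) ->
  (exists A, W A /\ \bigcup_i U i `<=` A) ->
  0 < eps -> 0 < r ->
  forall zeta : @PX R X,
    P_fam W U zeta -> VietM W zeta -> (W1 zeta mu < r%:E)%E ->
    Fmap W mu U eps zeta !=set0 /\
    PX_convex (Fmap W mu U eps zeta) /\
    weak_closed (Fmap W mu U eps zeta).
Proof.
move=> _ _ _ _ _ hm hmu _ oU dU xU hA e0 _ zeta Pz Vz _.
split; first exact: (F_nonempty hm hmu oU dU xU hA e0 Pz).
split; first exact: (F_convex (mu:=mu) (zeta:=zeta) (eps:=eps) oU hA).
exact: (F_closed (mu:=mu) (eps:=eps) oU hA Vz).
Qed.
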